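(* Suppose the path decomposition $P_0,\dots,P_k$ of $G$ is well defined (i.e. the uniqueness assumptions below hold). Then there is an index $i_0\le k$ such that $f(P_0)>f(P_1)>\dots>f(P_{i_0})>0=f(P_{i_0+1})=\dots=f(P_k)$.
   Context: Let $G=(N,E)$ be a finite connected undirected graph with distinct vertices $s_0,s_1$ and edge lengths $L_e>0$; the length $L(P)$ of a path is the sum of its edge lengths, and $\operatorname{dist}(v,s_1)$ is the shortest-path distance. Path decomposition: $P_0$ is the shortest $s_0$-$s_1$ path (assumed unique), $f(P_0)=1$, and $p^*_v=\operatorname{dist}(v,s_1)$ for $v\in P_0$. Inductively, for $i\ge1$, as long as some edge does not belong to $P_0\cup\dots\cup P_{i-1}$, let $\mathcal P$ be the set of paths $P$ in $G$ whose startpoint $a$ and endpoint $b$ lie on $P_0\cup\dots\cup P_{i-1}$ with $p^*_a\ge p^*_b$, none of whose interior vertices lies on $P_0\cup\dots\cup P_{i-1}$, and none of whose edges belongs to $P_0\cup\dots\cup P_{i-1}$; for such $P$ set $f(P)=(p^*_a-p^*_b)/L(P)$. Let $P_i=\arg\max_{P\in\mathcal P}f(P)$ (assumed unique unless the maximum value is $0$). If $p^*_a>p^*_b$, $P_i$ is directed from $a$ to $b$; otherwise its edges stay undirected. For every interior vertex $v$ of $P_i$ set $p^*_v=p^*_b+f(P_i)\operatorname{dist}_{P_i}(v,b)$, where $\operatorname{dist}_{P_i}$ is distance along $P_i$; for edges $e$ of $P_i$ set $r_e=f(P_i)-1$ (and $r_e=0$ for $e\in P_0$). The process stops with $P_k$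 when all edges are covered. *)

(* Defs.v *)
From HB Require Import structures.
From mathcomp Require Import all_boot all_order all_algebra.
Set Implicit Arguments. Unset Strict Implicit. Unset Printing Implicit Defensive.
Import Order.TTheory GRing.Theory Num.Theory.
Local Open Scope ring_scope.

(* A finite undirected (multi)graph: vertex type V, edge type E, each edge e
   joins the two vertices [src e] and [tgt e] (the orientation src/tgt is an
   arbitrary labelling and plays no role: walks may use an edge both ways). *)
Section PathDecomposition.
Variables (R : realFieldType) (V E : finType) (src tgt : E -> V) (L : E -> R).

Definition nextv (x : V) (e : E) : V := if src e == x then tgt e else src e.

Fixpoint walk_ok (x : V) (es : seq E) : bool :=
  match es with
  | [::] => true
  | e :: es' => ((src e == x) || (tgt e == x)) && walk_ok (nextv x e) es'
  end.

Definition verts (x : V) (es : seq E) : seq V := x :: scanl nextv x es.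
Definition endp (x : V) (es : seq E) : V := last x (scanl nextv x es).
Definition interior (x : V) (es : seq E) : seq V :=
  behead (belast x (scanl nextv x es)).

Definition len (es : seq E) : R := \sum_(e <- es) L e.

Definition is_path (x : V) (es : seq E) : bool :=
  [&& walk_ok x es, uniq (verts x es) & (0 < size es)%N].

Fixpoint seqs_upto (n : nat) : seq (seq E) :=
  match n with
  | 0 => [:: [::]]
  | n'.+1 => [::] :: [seq e :: s | e <- enum E, s <- seqs_upto n']
  end.

(* minimum of a list of reals (0 for the empty list) *)
Definition minl (l : seq R) : R := foldr Num.min (head 0 l) l.

(* Since all
   lengths are positive, a shortest walk never repeats a vertex, so it is
   enough to minimise over walks with at most #|V| edges. *)
Definition dist (u v : V) : R :=
  minl [seq len es | es <- seqs_upto #|V| & walk_ok u es && (endp u es == v)].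

Definition connected : Prop :=
  forall u v : V, exists es, walk_ok u es /\ endp u es = v.

Definition gpath := (V * seq E)%type.
Definition startp (P : gpath) : V := P.1.
Definition endpt (P : gpath) : V := endp P.1 P.2.

Definition coveredV (Ps : seq gpath) : seq V :=
  flatten [seq verts P.1 P.2 | P <- Ps].
Definition coveredE (Ps : seq gpath) : seq E :=
  flatten [seq P.2 | P <- Ps].

Definition fval (p : V -> R) (P : gpath) : R :=
  (p (startp P) - p (endpt P)) / len P.2.

Definition dist_along (P : gpath) (v : V) : R :=
  len (drop (index v (verts P.1 P.2)) P.2).

(* update of the potentials p* after adding the path P *)
Definition pstep (p : V -> R) (P : gpath) : V -> R :=
  fun v => if v \in interior P.1 P.2
           then p (endpt P) + fval p P * dist_along P v
           else p v.

(* the potential p* after the paths Ps = [:: P_0; ...; P_{i-1}] have been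
   chosen (P_0 is the shortest path, on which p*_v = dist(v, s1)) *)
Definition pot (s1 : V) (Ps : seq gpath) : V -> R :=
  foldl pstep (fun v => dist v s1) (behead Ps).

Definition candidate (Ps : seq gpath) (p : V -> R) (P : gpath) : bool :=
  [&& is_path P.1 P.2,
      startp P \in coveredV Ps, endpt P \in coveredV Ps,
      p (endpt P) <= p (startp P),
      all (fun v => v \notin coveredV Ps) (interior P.1 P.2) &
      all (fun e => e \notin coveredE Ps) P.2].

Definition fP (s1 : V) (Ps : seq gpath) (i : nat) : R :=
  if i == 0%N then 1
  else fval (pot s1 (take i Ps)) (nth (s1, [::]) Ps i).

Definition path_decomposition (s0 s1 : V) (Ps : seq gpath) : Prop :=
  (0 < size Ps)%N /\
  (let P0 := nth (s1, [::]) Ps 0 in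
     [/\ startp P0 = s0, endpt P0 = s1, is_path P0.1 P0.2,
         len P0.2 = dist s0 s1 &
         forall es, is_path s0 es -> endp s0 es = s1 ->
                    len es = dist s0 s1 -> es = P0.2]) /\
  (forall i, (0 < i < size Ps)%N ->
     let prev := take i Ps in
     let p := pot s1 prev in
     let Pi := nth (s1, [::]) Ps i in
     [/\ candidate prev p Pi,
         (forall Q, candidate prev p Q -> fval p Q <= fval p Pi) &
         (0 < fval p Pi ->
            forall Q, candidate prev p Q -> fval p Q = fval p Pi -> Q = Pi)]) /\
  (forall e : E, e \in coveredE Ps).

End PathDecomposition.

(* Main.v *)
Require Import Defs.
From HB Require Import structures.
From mathcomp Require Import all_boot all_order all_algebra.
From mathcomp Require Import zify lra.
Import Order.TTheory GRing.Theory Num.Theory.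
Local Open Scope ring_scope.

Set Implicit Arguments. Unset Strict Implicit. Unset Printing Implicit Defensive.

Section Walks.
Variables (R : realFieldType) (V E : finType) (src tgt : E -> V) (L : E -> R).
Hypothesis Lpos : forall e, 0 < L e.

Local Notation nv := (nextv src tgt).
Local Notation wok := (walk_ok src tgt).
Local Notation vs := (verts src tgt).
Local Notation ep := (endp src tgt).
Local Notation intr := (interior src tgt).
Local Notation ln := (len L).
Local Notation ispath := (is_path src tgt).

Lemma endpE x es : ep x es = foldl nv x es.
Proof. by rewrite /endp; elim: es x => //= e es IH x; rewrite IH. Qed.

Lemma wok_cat x A B : wok x (A ++ B) = wok x A && wok (ep x A) B.
Proof. by rewrite endpE; elim: A x => //= e A IH x; rewrite IH andbA. Qed.

Lemma ep_cat x A B : ep x (A ++ B) = ep (ep x A) B.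
Proof. by rewrite !endpE foldl_cat. Qed.

Lemma vs_cat x A B : vs x (A ++ B) = vs x A ++ behead (vs (ep x A) B).
Proof. by rewrite /verts scanl_cat endpE. Qed.

Lemma size_vs x es : size (vs x es) = (size es).+1.
Proof. by rewrite /= size_scanl. Qed.

Lemma len_cat A B : ln (A ++ B) = ln A + ln B.
Proof. by rewrite /len big_cat. Qed.

Lemma len_ge0 A : 0 <= ln A.
Proof. by rewrite /len; apply: sumr_ge0 => e _; apply: ltW. Qed.

Lemma len_gt0 A : (0 < size A)%N -> 0 < ln A.
Proof.
case: A => // e A _; rewrite /len big_cons.
by apply: ltr_wpDr; [apply: len_ge0 | apply: Lpos].
Qed.

Lemma head_vs x es : head x (vs x es) = x. Proof. by []. Qed.

Lemma last_vs x es : last x (vs x es) = ep x es. Proof. by []. Qed.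

Lemma vs_split x es : es != [::] ->
  vs x es = x :: rcons (intr x es) (ep x es).
Proof.
rewrite /verts /interior /endp; case: es => //= e es _.
by rewrite -lastI.
Qed.

Lemma vs_take x es j : (j <= size es)%N -> vs x (take j es) = take j.+1 (vs x es).
Proof.
move=> hj; have := vs_cat x (take j es) (drop j es); rewrite cat_take_drop => ->.
have hs : size (vs x (take j es)) = j.+1 by rewrite size_vs size_takel.
rewrite takel_cat; last by rewrite size_vs size_takel.
by rewrite [RHS]take_oversize // hs.
Qed.

Lemma ep_take x es j : (j <= size es)%N -> ep x (take j es) = nth x (vs x es) j.
Proof.
move=> hj; rewrite -last_vs vs_take // (last_nth x).
have -> : size (take j.+1 (vs x es)) = j.+1 by rewrite size_takel // size_vs.
transitivity (nth x (take j.+1 (vs x es)) j); first by [].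
by rewrite nth_take.
Qed.

Lemma vs_drop x es j : (j <= size es)%N ->
  vs (ep x (take j es)) (drop j es) = drop j (vs x es).
Proof.
move=> hj; have := vs_cat x (take j es) (drop j es); rewrite cat_take_drop vs_take // => h.
have h2 : behead (vs (ep x (take j es)) (drop j es)) = drop j.+1 (vs x es).
  by rewrite -{1}(cat_take_drop j.+1 (vs x es)) in h; move/eqP: h; rewrite eqseq_cat ?size_take // => /andP[_ /eqP].
rewrite (drop_nth x) ?size_vs // -h2 -ep_take //.
Qed.

Lemma wok_take x es j : wok x es -> wok x (take j es).
Proof. by rewrite -{1}(cat_take_drop j es) wok_cat => /andP[]. Qed.

Lemma wok_drop x es j : wok x es -> wok (ep x (take j es)) (drop j es).
Proof. by rewrite -{1}(cat_take_drop j es) wok_cat => /andP[]. Qed.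

Lemma ep_drop x es j : ep (ep x (take j es)) (drop j es) = ep x es.
Proof. by rewrite -ep_cat cat_take_drop. Qed.


Lemma take_drop_disj (T : eqType) (s : seq T) i j v :
  uniq s -> (i <= j)%N -> v \in take i s -> v \notin drop j s.
Proof.
move=> us hij vi; have : uniq (take j s ++ drop j s) by rewrite cat_take_drop.
rewrite cat_uniq => /and3P[_ /hasPn h _]; apply/negP => vd.
have := h v vd; rewrite /= -(take_takel s hij) in vi.
by rewrite (mem_take vi).
Qed.

Lemma vs_uniq_split x es : es != [::] -> uniq (vs x es) ->
  [/\ x \notin intr x es, x != ep x es, ep x es \notin intr x es & uniq (intr x es)].
Proof.
move=> ne; rewrite vs_split // /= mem_rcons in_cons rcons_uniq negb_or.
by case/and3P=> /andP[h1 h2] h3 h4; split.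
Qed.

Lemma mem_intr x es v : es != [::] -> uniq (vs x es) ->
  (v \in intr x es) = [&& v \in vs x es, v != x & v != ep x es].
Proof.
move=> ne u; have [h1 h2 h3 h4] := vs_uniq_split ne u.
rewrite vs_split // in_cons mem_rcons in_cons.
case: (boolP (v \in intr x es)) => vi.
  have vx : v != x by apply/eqP => e; move: vi; rewrite e (negbTE h1).
  have vw : v != ep x es by apply/eqP => e; move: vi; rewrite e (negbTE h3).
  by rewrite !orbT vx vw.
by rewrite orbF; case: eqP => //= _; case: eqP.
Qed.

Lemma take_vs_intr x es j v : uniq (vs x es) -> (j < size es)%N ->
  v \in take j.+1 (vs x es) -> v != x -> v \in intr x es.
Proof.
move=> u hj vt vx; have ne : es != [::] by apply/eqP => e; rewrite e in hj.
rewrite mem_intr // vx (mem_take vt) /=.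
have hd : drop (size es) (vs x es) = [:: ep x es].
  by rewrite -vs_drop // take_size drop_size.
apply/eqP => e; subst v.
have := take_drop_disj u hj vt; by rewrite hd mem_head.
Qed.

Lemma drop_vs_intr x es j v : uniq (vs x es) -> (0 < j)%N -> (j <= size es)%N ->
  v \in drop j (vs x es) -> v != ep x es -> v \in intr x es.
Proof.
move=> u hj hj' vd vw; have ne : es != [::] by apply/eqP => e; rewrite e leqn0 in hj'; rewrite (eqP hj') in hj.
rewrite mem_intr // vw (mem_drop vd) andbT.
apply/eqP => e; subst v.
have ht : x \in take 1 (vs x es) by rewrite /verts /= mem_head.
by have := take_drop_disj u hj ht; rewrite vd.
Qed.

Lemma splice x A a q B : wok x A -> ep x A = a -> uniq (vs x A) ->
  ispath a q -> wok (ep a q) B -> uniq (vs (ep a q) B) ->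
  (forall v, v \in vs x A -> v \notin vs (ep a q) B) ->
  (forall v, v \in intr a q -> (v \notin vs x A) && (v \notin vs (ep a q) B)) ->
  [/\ ispath x (A ++ q ++ B), ep x (A ++ q ++ B) = ep (ep a q) B &
     forall v, v \in vs x (A ++ q ++ B) ->
       [|| v \in vs x A, v \in intr a q | v \in vs (ep a q) B]].
Proof.
move=> wA eA uA /and3P[wq uq sq] wB uB dAB dQ.
have qne : q != [::] by apply/eqP => e; rewrite e in sq.
set b := ep a q in wB uB dAB dQ *.
have hV : vs x (A ++ q ++ B) = vs x A ++ (rcons (intr a q) b ++ behead (vs b B)).
  rewrite vs_cat eA vs_cat (vs_split a qne); done.
have bB : b \in vs b B by rewrite mem_head.
have uQ := uq; rewrite (vs_split a qne) /= in uQ; case/andP: uQ => _ uQ.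
have uB' := uB; rewrite /= in uB'; case/andP: uB' => bnB usB.
split.
- rewrite /is_path wok_cat wA eA wok_cat wq wB hV !size_cat.
  apply/and3P; split => //; last by case: (size q) sq => // n _; rewrite addnS.
  rewrite cat_uniq uA /=; apply/andP; split.
    apply/hasPn => v; rewrite mem_cat mem_rcons in_cons => /orP[/orP[/eqP->|vi]|vs'].
    + by apply/negP => /dAB; rewrite bB.
    + by case/andP: (dQ v vi).
    + by apply/negP => /dAB; rewrite /= in_cons vs' orbT.
  rewrite cat_uniq uQ usB andbT; apply/hasPn => v vs'.
  rewrite mem_rcons in_cons negb_or; apply/andP; split.
    by apply/negP => /eqP e; subst v; rewrite vs' in bnB.
  by apply/negP => /dQ /andP[_]; rewrite /= in_cons vs' orbT.
- by rewrite ep_cat eA ep_cat.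
- move=> v; rewrite hV mem_cat mem_cat mem_rcons in_cons => /orP[->//|/orP[/orP[/eqP->|->]|vs']].
  + by rewrite bB !orbT.
  + by rewrite orbT.
  + by rewrite (mem_behead vs') !orbT.
Qed.


Lemma len_mid es i j : (i <= j)%N ->
  ln es = ln (take i es) + ln (take (j - i) (drop i es)) + ln (drop j es).
Proof.
move=> hij; rewrite -addrA -len_cat.
have -> : drop j es = drop (j - i) (drop i es) by rewrite drop_drop subnK.
by rewrite cat_take_drop -len_cat cat_take_drop.
Qed.

Lemma len_drop_le es i j : (i <= j)%N -> ln (drop j es) <= ln (drop i es).
Proof.
move=> hij; rewrite [X in _ <= X](len_mid (drop i es) (leq0n (j - i))) take0 drop0.
rewrite drop_drop subnK // /len big_nil add0r lerDr; exact: len_ge0.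
Qed.

Lemma shorten x es : wok x es -> exists es',
  [/\ wok x es', ep x es' = ep x es, uniq (vs x es') & ln es' <= ln es].
Proof.
move: {2}(size es) (leqnn (size es)) => n; elim: n es => [|n IH] es hs w.
  by move: hs; rewrite leqn0 => /nilP ->; exists [::].
case: (boolP (uniq (vs x es))) => u; first by exists es.
case/(uniqPn x): u => i [j [hij hj he]].
rewrite size_vs ltnS in hj.
have hi : (i <= size es)%N by apply: ltnW; apply: leq_trans hj.
have eij : ep x (take i es) = ep x (take j es) by rewrite !ep_take.
set es' := take i es ++ drop j es.
have w' : wok x es' by rewrite wok_cat wok_take //= eij wok_drop.
have e' : ep x es' = ep x es by rewrite ep_cat eij ep_drop.
have s' : (size es' <= n)%N.
  rewrite size_cat size_takel // size_drop; lia.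
have l' : ln es' <= ln es.
  rewrite (len_mid es (ltnW hij)) len_cat lerD2r lerDl; exact: len_ge0.
have [es'' [w'' e'' u'' l'']] := IH es' s' w'.
by exists es''; split => //; [rewrite e'' | apply: le_trans l'].
Qed.

Lemma mem_seqs n (s : seq E) : (size s <= n)%N -> s \in seqs_upto E n.
Proof.
elim: n s => [|n IH] [|e s] //= hs.
rewrite in_cons; apply/orP; right.
by apply: (allpairs_f (fun e s => e :: s)); [rewrite mem_enum | exact: IH].
Qed.

Lemma foldr_min_le h (l : seq R) x : x \in l -> foldr Num.min h l <= x.
Proof.
elim: l => //= y l IH; rewrite in_cons => /orP[/eqP->|xl]; rewrite ge_min.
  by rewrite lexx.
by rewrite IH ?orbT.
Qed.

Lemma foldr_min_in h (l : seq R) : foldr Num.min h l \in h :: l.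
Proof.
elim: l => [|y l IH] /=; first by rewrite mem_head.
rewrite minEle; case: ifP => _; first by rewrite !in_cons eqxx orbT.
by move: IH; rewrite !in_cons => /orP[->|->]; rewrite ?orbT.
Qed.

Lemma minl_le (l : seq R) x : x \in l -> minl l <= x.
Proof. exact: foldr_min_le. Qed.

Lemma minl_in (l : seq R) : l != [::] -> minl l \in l.
Proof.
case: l => // y l _; have := foldr_min_in y (y :: l).
by rewrite /minl /= !in_cons orbA orbb.
Qed.

Local Notation dst := (dist src tgt L).

Lemma dist_le_small u v es : wok u es -> ep u es = v -> (size es <= #|V|)%N ->
  dst u v <= ln es.
Proof.
move=> w e s; apply: minl_le; apply: map_f.
by rewrite mem_filter w e eqxx /= mem_seqs.
Qed.

Lemma size_uniq_vs u es : uniq (vs u es) -> (size es <= #|V|)%N.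
Proof.
move=> uv; have := uniq_leq_size uv (fun y _ => mem_enum V y).
by rewrite size_vs -cardE => /ltnW.
Qed.

Lemma dist_le u v es : wok u es -> ep u es = v -> dst u v <= ln es.
Proof.
move=> w e; have [es' [w' e' u' l']] := shorten w.
apply: le_trans l'; apply: dist_le_small => //; first by rewrite e'.
exact: size_uniq_vs u'.
Qed.

Lemma dist_attained u v es : wok u es -> ep u es = v -> exists es',
  [/\ wok u es', ep u es' = v & dst u v = ln es'].
Proof.
move=> w e; have [es0 [w0 e0 u0 _]] := shorten w.
set l := [seq ln es | es <- seqs_upto E #|V| & wok u es && (ep u es == v)].
have ne : l != [::].
  have : ln es0 \in l.
    by apply: map_f; rewrite mem_filter w0 e0 e eqxx /= mem_seqs // (size_uniq_vs u0).
  by case: (l).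
have := minl_in ne; rewrite /dist -/l => /mapP[es1]; rewrite mem_filter => /andP[/andP[w1 /eqP e1] _] ->.
by exists es1.
Qed.


Lemma nth_index_vs x es v : v \in vs x es ->
  [/\ (index v (vs x es) <= size es)%N & v = nth x (vs x es) (index v (vs x es))].
Proof.
move=> vi; split; last by rewrite nth_index.
by rewrite -ltnS -(size_vs x es) index_mem.
Qed.

Lemma take_vs_sub x es j v : v \in vs x (take j es) -> v \in vs x es.
Proof.
case: (leqP j (size es)) => h; first by rewrite vs_take // => /mem_take.
by rewrite take_oversize // ltnW.
Qed.

Section Step0.
Variables (s0 s1 : V) (es0 : seq E).
Hypotheses (p0 : ispath s0 es0) (e0 : ep s0 es0 = s1) (l0 : ln es0 = dst s0 s1)
  (uq0 : forall es, ispath s0 es -> ep s0 es = s1 -> ln es = dst s0 s1 -> es = es0).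

Lemma dist_on_P0 j : (j <= size es0)%N -> dst (nth s0 (vs s0 es0) j) s1 = ln (drop j es0).
Proof.
move=> hj; case/and3P: p0 => w0 u0 _; rewrite -ep_take //.
apply/eqP; rewrite eq_le; apply/andP; split.
  by apply: dist_le; [exact: wok_drop | rewrite ep_drop e0].
have [w [ww ew ->]] := dist_attained (wok_drop j w0) (etrans (ep_drop s0 es0 j) e0).
have := @dist_le s0 s1 (take j es0 ++ w).
rewrite wok_cat wok_take // ww ep_cat ew -l0 len_cat => /(_ isT erefl).
by rewrite -{1}(cat_take_drop j es0) len_cat lerD2l.
Qed.

Lemma step0 (Q : gpath V E) : candidate src tgt [:: (s0, es0)] (fun v => dst v s1) Q ->
  fval src tgt L (fun v => dst v s1) Q < 1.
Proof.
case: Q => a q; rewrite /candidate /coveredV /coveredE /= !cats0 /startp /endpt /=.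
case/and3P: (p0) => w0 u0 _.
case/and5P=> pq aV bV hab /andP[/allP iq /allP eq].
have sq : (0 < size q)%N by case/and3P: pq.
have lq : 0 < ln q by apply: len_gt0.
rewrite /fval /= ltr_pdivrMr // mul1r.
set b := ep a q in bV hab iq *.
have [ha ea] := nth_index_vs aV; have [hb eb] := nth_index_vs bV.
set ja := index a _ in ha ea; set jb := index b _ in hb eb.
rewrite /endpt /= -/b {1}ea {1}eb !dist_on_P0 //.
case: (leqP jb ja) => hj.
  apply: le_lt_trans lq; rewrite subr_le0; exact: len_drop_le.
rewrite ltNge; apply/negP => hle.
have eA : ep s0 (take ja es0) = a by rewrite ep_take.
have eB : ep a q = ep s0 (take jb es0) by rewrite ep_take.
have h1 : uniq (vs s0 (take ja es0)) by rewrite vs_take // take_uniq.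
have h2 : wok (ep a q) (drop jb es0) by rewrite eB; exact: wok_drop.
have h3 : uniq (vs (ep a q) (drop jb es0)) by rewrite eB vs_drop // drop_uniq.
have h4 : forall v, v \in vs s0 (take ja es0) -> v \notin vs (ep a q) (drop jb es0).
  by move=> v; rewrite eB vs_drop // vs_take //; apply: take_drop_disj.
have h5 : forall v, v \in intr a q ->
    (v \notin vs s0 (take ja es0)) && (v \notin vs (ep a q) (drop jb es0)).
  move=> v /iq vn; apply/andP; split; apply: contra vn; first exact: take_vs_sub.
  by rewrite eB vs_drop // => /mem_drop.
have [pC eC _] := splice (wok_take _ w0) eA h1 pq h2 h3 h4 h5.
rewrite eB ep_drop e0 in eC.
have hC : dst s0 s1 <= ln (take ja es0 ++ q ++ drop jb es0) by apply: dist_le eC; case/and3P: pC.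
have hC' : ln (take ja es0 ++ q ++ drop jb es0) <= dst s0 s1.
  rewrite -l0; have -> : ln es0 = ln (take ja es0) + ln (drop ja es0) by rewrite -len_cat cat_take_drop.
  rewrite !len_cat lerD2l.
  by rewrite -lerBrDr.
have eqC : take ja es0 ++ q ++ drop jb es0 = es0.
  by apply: uq0 => //; apply/le_anti; rewrite hC hC'.
have [e qe] : exists e, e \in q by case: (q) sq => // e' ? _; exists e'; rewrite mem_head.
by have := eq e qe; rewrite -eqC !mem_cat qe orbT.
Qed.

End Step0.


Lemma covV_rcons (prev : seq (gpath V E)) P :
  coveredV src tgt (rcons prev P) = coveredV src tgt prev ++ vs P.1 P.2.
Proof. by rewrite /coveredV -cats1 map_cat flatten_cat /= cats0. Qed.

Lemma covE_rcons (prev : seq (gpath V E)) P :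
  coveredE (rcons prev P) = coveredE prev ++ P.2.
Proof. by rewrite /coveredE -cats1 map_cat flatten_cat /= cats0. Qed.

Lemma path_ne a q : ispath a q -> a != ep a q.
Proof.
case/and3P=> _ u s; have ne : q != [::] by apply/eqP => e; rewrite e in s.
by have [] := vs_uniq_split ne u.
Qed.

Lemma vs_nil x : vs x [::] = [:: x]. Proof. by []. Qed.
Lemma ep_nil x : ep x [::] = x. Proof. by []. Qed.
Lemma len_nil : ln [::] = 0. Proof. by rewrite /len big_nil. Qed.

Section StepGen.
Variables (prev : seq (gpath V E)) (p : V -> R) (u : V) (es : seq E).
Local Notation cand := (candidate src tgt).
Local Notation fv := (fval src tgt L).
Local Notation covV := (coveredV src tgt prev).
Local Notation covE := (coveredE prev).
Local Notation F := (fval src tgt L p (u, es)).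
Local Notation p' := (pstep src tgt L p (u, es)).
Local Notation w := (ep u es).
Local Notation VP := (vs u es).
Local Notation I := (intr u es).

Hypotheses (cP : cand prev p (u, es))
  (maxP : forall C, cand prev p C -> fv p C <= F)
  (uniqP : 0 < F -> forall C, cand prev p C -> fv p C = F -> C = (u, es)).

Lemma cP_facts : [/\ ispath u es, u \in covV, w \in covV, p w <= p u &
  {in I, forall v, v \notin covV} /\ {in es, forall e, e \notin covE}].
Proof. by case/and5P: cP => h1 h2 h3 h4 /andP[/allP h5 /allP h6]. Qed.

Lemma es_ne : es != [::].
Proof. have [/and3P[_ _ s] _ _ _ _] := cP_facts; by apply/eqP => e; rewrite e in s. Qed.

Lemma VP_uniq : uniq VP.
Proof. by have [/and3P[_ ? _] _ _ _ _] := cP_facts. Qed.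

Lemma les_gt0 : 0 < ln es.
Proof. by apply: len_gt0; case: (es) es_ne. Qed.

Lemma F_ge0 : 0 <= F.
Proof.
have [_ _ _ h _] := cP_facts; rewrite /fval /=.
by apply: divr_ge0; [rewrite subr_ge0 | exact: ltW les_gt0].
Qed.

Lemma pu_eq : p u = p w + F * ln es.
Proof.
rewrite /fval /= mulrC mulrCA mulfV ?mulr1; last by rewrite gt_eqF // les_gt0.
by rewrite addrC subrK.
Qed.

Lemma p'_out v : v \notin I -> p' v = p v.
Proof. by move=> h; rewrite /pstep /= (negbTE h). Qed.

Lemma p'_in v : v \in I -> p' v = p w + F * ln (drop (index v VP) es).
Proof. by move=> h; rewrite /pstep /= h. Qed.

Lemma intr_idx v : v \in I ->
  [/\ (0 < index v VP)%N, (index v VP < size es)%N & v = nth u VP (index v VP)].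
Proof.
move=> vi; have := vi; rewrite mem_intr ?es_ne ?VP_uniq // => /and3P[vV vu vw].
have [hl e] := nth_index_vs vV; split => //.
- rewrite lt0n; apply: contra vu => /eqP h; by rewrite e h.
- rewrite ltn_neqAle hl andbT; apply: contra vw => /eqP h.
  by rewrite e h -ep_take // take_size.
Qed.

Lemma covered_out v : v \in covV ++ VP -> v \notin I -> v \in covV.
Proof.
have [_ hu hw _ _] := cP_facts.
rewrite mem_cat => /orP[//|vV] vI; move: vI; rewrite mem_intr ?es_ne ?VP_uniq // vV /=.
by rewrite negb_and !negbK => /orP[/eqP->|/eqP->].
Qed.

Lemma nondeg a q x A B :
  ispath a q -> (forall v, v \in intr a q -> v \notin covV ++ VP) ->
  (forall e, e \in q -> e \notin covE ++ es) -> p' (ep a q) <= p' a ->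
  wok x A -> ep x A = a -> uniq (vs x A) ->
  wok (ep a q) B -> uniq (vs (ep a q) B) ->
  (forall v, v \in vs x A -> v \notin vs (ep a q) B) ->
  {subset vs x A <= covV ++ VP} -> {subset vs (ep a q) B <= covV ++ VP} ->
  x \in covV -> ep (ep a q) B \in covV ->
  (forall v, v \in vs x A -> v != x -> v \notin covV) ->
  (forall v, v \in vs (ep a q) B -> v != ep (ep a q) B -> v \notin covV) ->
  {subset A <= es} -> {subset B <= es} ->
  p x - p' a = F * ln A -> p' (ep a q) - p (ep (ep a q) B) = F * ln B ->
  exists C, [/\ cand prev p C, C != (u, es),
    (fv p C <= F -> fv p' (a, q) <= F) & (fv p' (a, q) = F -> fv p C = F)].
Proof.
set b := ep a q => pq iq eq hab wA eA uA wB uB dAB sA sB xc yc iA iB eA' eB' hA hB.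
have [pC eC vC] := splice wA eA uA pq wB uB dAB
  (fun v vi => let h := iq v vi in
     introT andP (conj (contra (sA v) h) (contra (sB v) h))).
have [_ _ _ _ [_ cPe]] := cP_facts.
set y := ep b B in yc iB hB eC *.
have lq : 0 < ln q by apply: len_gt0; case/and3P: pq.
have lA := len_ge0 A; have lB := len_ge0 B; have F0 := F_ge0.
set f := fval src tgt L p (u, es) in hA hB F0 *.
exists (x, A ++ q ++ B); split.
- rewrite /candidate /= /startp /endpt /= eC pC xc yc /=.
  apply/and3P; split.
  + have := mulr_ge0 F0 lA; have := mulr_ge0 F0 lB; lra.
  + have Cne : A ++ q ++ B != [::].
      by case/and3P: pq => _ _; case: (q) => // ? ?; rewrite cat_cons /=; case: (A).
    apply/allP => v vi; have := vi; case/and3P: pC => _ uC _.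
    rewrite mem_intr // eC => /and3P[vV vx vy].
    case/or3P: (vC v vV) => [va|vq|vb].
    * exact: iA.
    * by have := iq v vq; rewrite mem_cat negb_or => /andP[].
    * exact: iB.
  + apply/allP => e; rewrite !mem_cat => /or3P[ea|eqq|eb].
    * exact: cPe e (eA' e ea).
    * by have := eq e eqq; rewrite mem_cat negb_or => /andP[].
    * exact: cPe e (eB' e eb).
- apply/negP => /eqP [] _ eqC.
  have [e qe] : exists e, e \in q.
    by case/and3P: pq => _ _; case: (q) => // e' ? _; exists e'; rewrite mem_head.
  by have := eq e qe; rewrite -eqC !mem_cat qe !orbT.
- rewrite /fval /= /startp /endpt /= -/b eC !len_cat => h.
  have hden : 0 < ln A + (ln q + ln B) by lra.
  rewrite ler_pdivrMr // in h; rewrite ler_pdivrMr //; lra.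
- rewrite /fval /= /startp /endpt /= -/b eC !len_cat => h.
  have hden : 0 < ln A + (ln q + ln B) by lra.
  have hq : p' a - p' b = f * ln q by rewrite -h mulrC mulrCA mulfV ?mulr1 // gt_eqF.
  apply: (mulIf (lt0r_neq0 hden)); rewrite divfK ?lt0r_neq0 //; lra.
Qed.

Lemma step_main Q : cand (rcons prev (u, es)) p' Q ->
  fv p' Q <= F /\ (0 < F -> fv p' Q < F).
Proof.
move=> cQ.
suff H : fv p' Q <= 0 \/ exists C, [/\ cand prev p C, C != (u, es),
    (fv p C <= F -> fv p' Q <= F) & (fv p' Q = F -> fv p C = F)].
  case: H => [h|[C [cC ne h1 h2]]].
    by split; [exact: le_trans h F_ge0 | move=> hF; exact: le_lt_trans h hF].
  have hle := h1 (maxP cC); split => // hF; rewrite lt_neqAle hle andbT.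
  apply/eqP => e; have := uniqP hF cC (h2 e); by move/eqP: ne.
case: Q cQ => a q; rewrite /candidate covV_rcons covE_rcons /= /startp /endpt /=.
case/and5P => pq aC bC hab /andP[/allP iq /allP eq].
have lq : 0 < ln q by apply: len_gt0; case/and3P: pq.
have degL : p' a <= p' (ep a q) -> fv p' (a, q) <= 0.
  by move=> h; rewrite /fval /= ler_pdivrMr // mul0r subr_le0.
have [/and3P[wP _ _] hu hw _ [hI hE]] := cP_facts.
have uP := VP_uniq; have F0 := F_ge0; have pu := pu_eq.
have ab := path_ne pq.
case: (boolP (a \in I)) => aI; case: (boolP (ep a q \in I)) => bI.
-
  have pa := p'_in aI; have pb := p'_in bI.
  have [ha0 haS ea] := intr_idx aI; have [hb0 hbS eb] := intr_idx bI.
  move: pa pb ha0 haS ea hb0 hbS eb.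
  set b := ep a q in bC hab degL ab bI *.
  set ja := index a VP; set jb := index b VP => pa pb ha0 haS ea hb0 hbS eb.
  have eb' : b = ep u (take jb es) by rewrite ep_take ?(ltnW hbS).
  have ew : ep b (drop jb es) = w by rewrite eb' ep_drop.
  case: (ltngtP ja jb) => hj.
  + right; apply: (nondeg (x:=u) (A:=take ja es) (B:=drop jb es)) pq iq eq hab _ _ _ _ _ _ _ _ hu _ _ _ _ _ _ _.
    all: try rewrite -/b.
    * exact: wok_take.
    * by rewrite ep_take ?(ltnW haS) // -ea.
    * by rewrite vs_take ?(ltnW haS) // take_uniq.
    * by rewrite eb'; exact: wok_drop.
    * by rewrite eb' vs_drop ?(ltnW hbS) // drop_uniq.
    * by move=> v; rewrite eb' vs_drop ?(ltnW hbS) // vs_take ?(ltnW haS) //; apply: take_drop_disj.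
    * by move=> v /take_vs_sub h; rewrite mem_cat h orbT.
    * by move=> v; rewrite eb' vs_drop ?(ltnW hbS) // => /mem_drop h; rewrite mem_cat h orbT.
    * by rewrite ew.
    * move=> v; rewrite vs_take ?(ltnW haS) // => vt vu; apply: hI.
      exact: take_vs_intr uP haS vt vu.
    * move=> v; rewrite ew; rewrite eb' vs_drop ?(ltnW hbS) // => vd vw; apply: hI.
      exact: drop_vs_intr uP hb0 (ltnW hbS) vd vw.
    * by move=> e /mem_take.
    * by move=> e /mem_drop.
    * have := len_cat (take ja es) (drop ja es); rewrite cat_take_drop => hl.
      rewrite pa pu hl; lra.
    * rewrite ew pb; lra.
  + left; apply degL; rewrite pa pb lerD2l; apply: (ler_wpM2l F0).
    exact: len_drop_le (ltnW hj).
  + by rewrite ea eb hj eqxx in ab.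
-
  have pa := p'_in aI; have [ha0 haS ea] := intr_idx aI.
  move: pa ha0 haS ea.
  set b := ep a q in bC hab degL ab bI *.
  set ja := index a VP => pa ha0 haS ea.
  case: (eqVneq b u) => bu.
  + left; apply degL; rewrite pa (p'_out bI) bu pu lerD2l; apply: (ler_wpM2l F0).
    by have := len_drop_le es (leq0n ja); rewrite drop0.
  + right; apply: (nondeg (x:=u) (A:=take ja es) (B:=[::])) pq iq eq hab _ _ _ _ _ _ _ _ hu _ _ _ _ _ _ _.
    all: try rewrite -/b.
    * exact: wok_take.
    * by rewrite ep_take ?(ltnW haS) // -ea.
    * by rewrite vs_take ?(ltnW haS) // take_uniq.
    * by [].
    * by [].
    * move=> v vt; rewrite vs_nil mem_seq1; apply/eqP => e; rewrite e in vt.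
      move: vt; rewrite vs_take ?(ltnW haS) // => vt.
      by have := take_vs_intr uP haS vt bu; rewrite (negbTE bI).
    * by move=> v /take_vs_sub h; rewrite mem_cat h orbT.
    * by move=> v; rewrite vs_nil mem_seq1 => /eqP ->.
    * by rewrite ep_nil; exact: covered_out bC bI.
    * move=> v; rewrite vs_take ?(ltnW haS) // => vt vu; apply: hI.
      exact: take_vs_intr uP haS vt vu.
    * by move=> v; rewrite vs_nil mem_seq1 ep_nil => /eqP ->; rewrite eqxx.
    * by move=> e /mem_take.
    * by move=> e; rewrite in_nil.
    * have := len_cat (take ja es) (drop ja es); rewrite cat_take_drop => hl.
      rewrite pa pu hl; lra.
    * by rewrite (p'_out bI) ep_nil len_nil mulr0 subrr.
-
  have pb := p'_in bI; have [hb0 hbS eb] := intr_idx bI.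
  move: pb hb0 hbS eb.
  set b := ep a q in bC hab degL ab bI *.
  set jb := index b VP => pb hb0 hbS eb.
  have eb' : b = ep u (take jb es) by rewrite ep_take ?(ltnW hbS).
  have ew : ep b (drop jb es) = w by rewrite eb' ep_drop.
  case: (eqVneq a w) => aw.
  + left; apply degL; rewrite (p'_out aI) pb aw lerDl; exact: mulr_ge0 F0 (len_ge0 _).
  + right; apply: (nondeg (x:=a) (A:=[::]) (B:=drop jb es)) pq iq eq hab _ _ _ _ _ _ _ _ _ _ _ _ _ _ _ _.
    all: try rewrite -/b.
    * by [].
    * by [].
    * by [].
    * by rewrite eb'; exact: wok_drop.
    * by rewrite eb' vs_drop ?(ltnW hbS) // drop_uniq.
    * move=> v; rewrite vs_nil mem_seq1 => /eqP ->; rewrite eb' vs_drop ?(ltnW hbS) //.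
      apply/negP => ad; have := drop_vs_intr uP hb0 (ltnW hbS) ad aw.
      by rewrite (negbTE aI).
    * by move=> v; rewrite vs_nil mem_seq1 => /eqP ->.
    * by move=> v; rewrite eb' vs_drop ?(ltnW hbS) // => /mem_drop h; rewrite mem_cat h orbT.
    * exact: covered_out aC aI.
    * by rewrite ew.
    * by move=> v; rewrite vs_nil mem_seq1 => /eqP ->; rewrite eqxx.
    * move=> v; rewrite ew; rewrite eb' vs_drop ?(ltnW hbS) // => vd vw; apply: hI.
      exact: drop_vs_intr uP hb0 (ltnW hbS) vd vw.
    * by move=> e; rewrite in_nil.
    * by move=> e /mem_drop.
    * by rewrite (p'_out aI) len_nil mulr0 subrr.
    * rewrite ew pb; lra.
-
  set b := ep a q in bC hab degL ab bI *.
  right; apply: (nondeg (x:=a) (A:=[::]) (B:=[::])) pq iq eq hab _ _ _ _ _ _ _ _ _ _ _ _ _ _ _ _.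
  all: try rewrite -/b.
  * by [].
  * by [].
  * by [].
  * by [].
  * by [].
  * by move=> v; rewrite !vs_nil mem_seq1 => /eqP ->; rewrite mem_seq1.
  * by move=> v; rewrite vs_nil mem_seq1 => /eqP ->.
  * by move=> v; rewrite vs_nil mem_seq1 => /eqP ->.
  * exact: covered_out aC aI.
  * by rewrite ep_nil; exact: covered_out bC bI.
  * by move=> v; rewrite vs_nil mem_seq1 => /eqP ->; rewrite eqxx.
  * by move=> v; rewrite vs_nil mem_seq1 ep_nil => /eqP ->; rewrite eqxx.
  * by move=> e; rewrite in_nil.
  * by move=> e; rewrite in_nil.
  * by rewrite (p'_out aI) len_nil mulr0 subrr.
  * by rewrite (p'_out bI) ep_nil len_nil mulr0 subrr.
Qed.

End StepGen.

End Walks.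

Lemma pot_rcons (R : realFieldType) (V E : finType) (src tgt : E -> V) (L : E -> R)
  s1 (s : seq (gpath V E)) P : s != [::] ->
  pot src tgt L s1 (rcons s P) = pstep src tgt L (pot src tgt L s1 s) P.
Proof. by case: s => // x s _; rewrite /pot /= foldl_rcons. Qed.

Unset Implicit Arguments. Set Strict Implicit. Set Printing Implicit Defensive.

Theorem mainTheorem13 (R : realFieldType) (V E : finType)
    (src tgt : E -> V) (L : E -> R) (s0 s1 : V) (Ps : seq (V * seq E)) :
  connected src tgt ->
  s0 != s1 ->
  (forall e, 0 < L e) ->
  path_decomposition src tgt L s0 s1 Ps ->
  let k := (size Ps).-1 in
  let f := fP src tgt L s1 Ps in
  exists i0 : nat,
    [/\ (i0 <= k)%N,
        (forall i, (i < i0)%N -> f i.+1 < f i),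
        0 < f i0 &
        (forall i, (i0 < i <= k)%N -> f i = 0)].
Proof.
move=> _ _ Lp [hsz [H0 [hsteps _]]] k f.
have fge0 : forall i, (0 < i < size Ps)%N -> 0 <= f i.
  case=> [|i] // hi; have [c _ _] := hsteps i.+1 hi.
  move: c; rewrite /candidate => /and5P[/and3P[_ _ sz] _ _ hle _].
  rewrite /f /fP /= /fval divr_ge0 // ?subr_ge0 // ltW //; exact: len_gt0.
have fstep : forall i, (i.+1 < size Ps)%N -> f i.+1 <= f i /\ (0 < f i -> f i.+1 < f i).
  case=> [|i] hi.
  - have [c _ _] := hsteps 1%N hi.
    rewrite /f /fP /=; clear fge0 f k.
    case: Ps hsz H0 hsteps hi c => // P0 Ps' _ H0 _ _.
    rewrite /pot /=.
    case: P0 H0 => x0 es0 /= [hs0 hs1 hp0 hl0 huq]; rewrite /startp /= in hs0; subst x0.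
    rewrite /endpt /= in hs1.
    move=> c; rewrite take0 /= in c *; have h := step0 Lp hp0 hs1 hl0 huq c.
    by split; [exact: ltW | move=> _].
  - have hi' : (i.+1 < size Ps)%N by apply: ltn_trans hi.
    have [c m uq] := hsteps i.+1 (introT andP (conj (ltn0Sn i) hi')).
    have [c2 _ _] := hsteps i.+2 (introT andP (conj (ltn0Sn i.+1) hi)).
    have tn : take i.+2 Ps = rcons (take i.+1 Ps) (nth (s1, [::]) Ps i.+1) by rewrite (take_nth (s1, [::])).
    have tne : take i.+1 Ps != [::] by case: (Ps) hi' => // ? ?.
    move: c2; rewrite /f /fP /= tn pot_rcons //.
    move: c m uq; case: (nth (s1, [::]) Ps i.+1) => u es c m uq c2.
    apply: (step_main Lp c); [exact: m | exact: uq | exact: c2].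
have key : forall n, (n <= k)%N -> exists i0, [/\ (i0 <= n)%N,
    (forall i, (i < i0)%N -> f i.+1 < f i), 0 < f i0 &
    (forall i, (i0 < i <= n)%N -> f i = 0)].
  elim=> [|n IH] hn.
    exists 0%N; split.
    - by [].
    - by [].
    - by rewrite /f /fP /= ltr01.
    - by move=> i /andP[h1 h2]; move: h1; rewrite ltnNge h2.
  have hn' : (n.+1 < size Ps)%N by move: hn; rewrite /k; case: (size Ps) => //= m; rewrite ltnS.
  have [fs1 fs2] := fstep n hn'.
  have fg := fge0 n.+1 (introT andP (conj (ltn0Sn n) hn')).
  have [i0 [h1 h2 h3 h4]] := IH (ltnW hn).
  case: (eqVneq i0 n) => [e|ne].
  - subst i0; case: (ltrP 0 (f n.+1)) => hp.
    + exists n.+1; split => //.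
        move=> i; rewrite ltnS leq_eqVlt => /orP[/eqP->|]; [exact: fs2 | exact: h2].
      by move=> i /andP[a b]; move: a; rewrite ltnNge b.
    + exists n; split => //.
      move=> i /andP[a b]; have -> : i = n.+1 by apply/eqP; rewrite eqn_leq b a.
      by apply/le_anti; rewrite hp fg.
  - exists i0; split => //; first exact: leq_trans h1 (leqnSn n).
    have hi0 : (i0 < n)%N by rewrite ltn_neqAle ne h1.
    move=> i /andP[a b]; case: (leqP i n) => c; first by apply: h4; rewrite a c.
    have -> : i = n.+1 by apply/eqP; rewrite eqn_leq b c.
    have fn : f n = 0 by apply: h4; rewrite hi0 leqnn.
    by apply/le_anti; rewrite fg andbT -fn fs1.
exact: key k (leqnn k).
Qed.
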